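(* Consider equation (E) and assume each $\tau_i$ is non-decreasing. Suppose either $$\limsup_{t\to+\infty}\prod_{j=1}^{m}\Bigg[\prod_{i=1}^{m}\int_{\tau_j(t)}^{t}p_i(s)\exp\Bigg(\int_{\tau_i(s)}^{\tau_i(t)}\sum_{k=1}^{m}p_k(\xi)\exp\bigg(\int_{\tau_k(\xi)}^{\xi}\sum_{l=1}^{m}p_l(u)\,du\bigg)d\xi\Bigg)ds\Bigg]^{1/m}>\frac{1}{m^{m}},$$ or, assuming in addition that $\liminf_{t\to\infty}\int_{\tau_i(t)}^{t}p_i(s)\,ds=\beta_i\in(0,1/e]$ for every $i$ and letting $\lambda_i^{*}$ be the smallest real root of $e^{\beta_i\lambda}=\lambda$, $$\limsup_{\varepsilon\to0+}\Bigg(\limsup_{t\to+\infty}\prod_{j=1}^{m}\bigg(\prod_{i=1}^{m}\int_{\tau_j(t)}^{t}p_i(s)\exp\Big(\int_{\tau_i(s)}^{\tau_i(t)}\sum_{k=1}^{m}(\lambda_k^{*}-\varepsilon)\,p_k(\xi)\,d\xi\Big)ds\bigg)^{1/m}\Bigg)>\frac{1}{m^{m}}.$$ Then all solutions of (E) oscillate.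
   Context: Equation (E) is $x'(t)+\sum_{i=1}^{m}p_i(t)\,x(\tau_i(t))=0$, $t\ge t_0$, where $m\ge1$ is an integer and, for each $i$, $p_i,\tau_i:[t_0,\infty)\to[0,\infty)$ are continuous, $\tau_i(t)\le t$ for $t\ge t_0$, and $\lim_{t\to\infty}\tau_i(t)=\infty$. Let $\tau(t)=\min_i\tau_i(t)$ and $\tau_{(-1)}(t)=\sup\{s:\tau(s)\le t\}$. A solution of (E) is a function $x\in C([T_0,\infty);\mathbb{R})$ for some $T_0\ge t_0$ which is continuously differentiable on $[\tau_{(-1)}(T_0),\infty)$ and satisfies (E) for $t\ge\tau_{(-1)}(T_0)$. A solution is oscillatory if it has arbitrarily large zeros; ''all solutions oscillate'' means every solution is oscillatory. *)

(* Defs.v *)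
From Stdlib Require Import Reals Lra List ClassicalEpsilon.
Import ListNotations.
Open Scope R_scope.

(* Finite sums / products over indices 0 .. m-1 (the paper's 1..m). *)
Definition sumI (m : nat) (f : nat -> R) : R := fold_right Rplus 0 (map f (seq 0 m)).
Definition prodI (m : nat) (f : nat -> R) : R := fold_right Rmult 1 (map f (seq 0 m)).

(* tau(t) = min_i tau_i(t)  (m >= 1 in all uses). *)
Definition tau_min (m : nat) (tau : nat -> R -> R) (t : R) : R :=
  fold_right Rmin (tau 0%nat t) (map (fun i => tau i t) (seq 0 m)).

(* When f is
   Riemann integrable this is exactly RiemannInt (which is independent of
   the integrability proof); otherwise it is an unspecified real. In the
   statement it is only evaluated on continuous integrands over compact
   intervals inside [t0, oo) (for t large). *)
Definition Rint (f : R -> R) (a b : R) : R :=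
  epsilon (inhabits 0) (fun v => exists pr : Riemann_integrable f a b, RiemannInt pr = v).

Definition rootR (m : nat) (x : R) : R :=
  if Rle_dec x 0 then 0 else Rpower x (/ INR m).

Definition cont_on_from (f : R -> R) (a : R) : Prop :=
  forall t, a <= t -> forall eps, eps > 0 -> exists delta, delta > 0 /\
    forall s, a <= s -> Rabs (s - t) < delta -> Rabs (f s - f t) < eps.

Definition deriv_within_from (f : R -> R) (a t d : R) : Prop :=
  forall eps, eps > 0 -> exists delta, delta > 0 /\
    forall h, h <> 0 -> Rabs h < delta -> a <= t + h ->
      Rabs ((f (t + h) - f t) / h - d) < eps.

(* x is a solution of (E) with initial point T0, T0 >= t0:
   x continuous on [T0, oo), continuously differentiable on
   [tau_(-1)(T0), oo) where tau_(-1)(T0) = sup{s >= t0 : tau(s) <= T0},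
   and satisfies (E) there. *)
Definition is_solution (m : nat) (t0 : R) (p tau : nat -> R -> R)
    (x : R -> R) (T0 : R) : Prop :=
  t0 <= T0 /\ cont_on_from x T0 /\
  exists T1 : R,
    is_lub (fun s => t0 <= s /\ tau_min m tau s <= T0) T1 /\
    exists x' : R -> R,
      cont_on_from x' T1 /\
      (forall t, T1 <= t -> deriv_within_from x T1 t (x' t)) /\
      (forall t, T1 <= t -> x' t + sumI m (fun i => p i t * x (tau i t)) = 0).

Definition oscillatory (x : R -> R) (T0 : R) : Prop :=
  forall T, exists t, T <= t /\ T0 <= t /\ x t = 0.

(* limsup_{t -> +oo} F t > c  (limsup possibly +oo), unfolded. *)
Definition limsup_inf_gt (F : R -> R) (c : R) : Prop :=
  exists d, d > c /\ forall T, exists t, T <= t /\ d <= F t.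

(* limsup_{eps -> 0+} G(eps) > c, where "G(eps) > d" is given by the
   predicate Ggt eps d (G(eps) itself being a possibly infinite limsup). *)
Definition limsup_0plus_gt (Ggt : R -> R -> Prop) (c : R) : Prop :=
  exists d, d > c /\ forall delta, delta > 0 ->
    exists eps, 0 < eps /\ eps < delta /\ Ggt eps d.

Definition liminf_inf_eq (F : R -> R) (b : R) : Prop :=
  forall eps, eps > 0 ->
    (exists T, forall t, T <= t -> b - eps < F t) /\
    (forall T, exists t, T <= t /\ F t < b + eps).

Definition Q1 (m : nat) (p tau : nat -> R -> R) (xi : R) : R :=
  sumI m (fun k => p k xi * exp (Rint (fun u => sumI m (fun l => p l u)) (tau k xi) xi)).

Definition F1 (m : nat) (p tau : nat -> R -> R) (t : R) : R :=
  prodI m (fun j => rootR m (prodI m (fun i =>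
    Rint (fun s => p i s * exp (Rint (Q1 m p tau) (tau i s) (tau i t))) (tau j t) t))).

Definition F2 (m : nat) (p tau : nat -> R -> R) (lam : nat -> R) (eps t : R) : R :=
  prodI m (fun j => rootR m (prodI m (fun i =>
    Rint (fun s => p i s * exp (Rint (fun xi => sumI m (fun k => (lam k - eps) * p k xi))
                                     (tau i s) (tau i t))) (tau j t) t))).

(* Main.v *)
Require Import Defs.
From Stdlib Require Import Reals Lra Lia List ClassicalEpsilon Classical.
From Coquelicot Require Import Coquelicot.
Open Scope R_scope.


Lemma fold_plus_acc (l : list R) a : fold_right Rplus a l = fold_right Rplus 0 l + a.
Proof. induction l; simpl; [ring| rewrite IHl; ring]. Qed.
Lemma fold_mult_acc (l : list R) a : fold_right Rmult a l = fold_right Rmult 1 l * a.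
Proof. induction l; simpl; [ring| rewrite IHl; ring]. Qed.

Lemma sumI_0 f : sumI 0 f = 0. Proof. reflexivity. Qed.
Lemma prodI_0 f : prodI 0 f = 1. Proof. reflexivity. Qed.
Lemma sumI_S n f : sumI (S n) f = sumI n f + f n.
Proof. unfold sumI. rewrite seq_S, map_app, fold_right_app. simpl.
  rewrite fold_plus_acc. ring. Qed.
Lemma prodI_S n f : prodI (S n) f = prodI n f * f n.
Proof. unfold prodI. rewrite seq_S, map_app, fold_right_app. simpl.
  rewrite fold_mult_acc. ring. Qed.

Lemma sumI_ext n f g : (forall i, (i < n)%nat -> f i = g i) -> sumI n f = sumI n g.
Proof. induction n; intros H; [reflexivity|]. rewrite !sumI_S, IHn, H; auto. Qed.
Lemma prodI_ext n f g : (forall i, (i < n)%nat -> f i = g i) -> prodI n f = prodI n g.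
Proof. induction n; intros H; [reflexivity|]. rewrite !prodI_S, IHn, H; auto. Qed.
Lemma sumI_le n f g : (forall i, (i < n)%nat -> f i <= g i) -> sumI n f <= sumI n g.
Proof. induction n; intros H; [rewrite !sumI_0; lra|]. rewrite !sumI_S.
  assert (f n <= g n) by auto. assert (sumI n f <= sumI n g) by auto. lra. Qed.
Lemma sumI_nonneg n f : (forall i, (i < n)%nat -> 0 <= f i) -> 0 <= sumI n f.
Proof. intros H. replace 0 with (sumI n (fun _ => 0)). apply sumI_le; auto.
  induction n; auto. rewrite sumI_S, IHn; [ring|auto]. Qed.
Lemma sumI_ge_term n f k : (forall i, (i < n)%nat -> 0 <= f i) -> (k < n)%nat -> f k <= sumI n f.
Proof. induction n; intros H Hk; [lia|]. rewrite sumI_S.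
  destruct (Nat.eq_dec k n). subst. assert (0 <= sumI n f) by (apply sumI_nonneg; auto). lra.
  assert (f k <= sumI n f) by (apply IHn; auto; lia). assert (0 <= f n) by auto. lra. Qed.
Lemma sumI_mult_l n c f : c * sumI n f = sumI n (fun i => c * f i).
Proof. induction n; [unfold sumI; simpl; ring|]. rewrite !sumI_S, <- IHn. ring. Qed.
Lemma sumI_opp n f : sumI n (fun i => - f i) = - sumI n f.
Proof. induction n; [unfold sumI; simpl; ring|]. rewrite !sumI_S, IHn. ring. Qed.
Lemma prodI_nonneg n f : (forall i, (i < n)%nat -> 0 <= f i) -> 0 <= prodI n f.
Proof. induction n; intros H; [unfold prodI; simpl; lra|]. rewrite prodI_S.
  apply Rmult_le_pos; auto. Qed.
Lemma prodI_pos n f : (forall i, (i < n)%nat -> 0 < f i) -> 0 < prodI n f.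
Proof. induction n; intros H; [unfold prodI; simpl; lra|]. rewrite prodI_S.
  apply Rmult_lt_0_compat; auto. Qed.
Lemma prodI_le n f g : (forall i, (i < n)%nat -> 0 <= f i <= g i) -> prodI n f <= prodI n g.
Proof. induction n; intros H; [unfold prodI; simpl; lra|]. rewrite !prodI_S.
  apply Rmult_le_compat; try apply prodI_nonneg; try (intros; apply H; lia); try apply H; try lia.
  apply IHn; intros; apply H; lia. Qed.
Lemma prodI_mult n f g : prodI n (fun i => f i * g i) = prodI n f * prodI n g.
Proof. induction n; [unfold prodI; simpl; ring|]. rewrite !prodI_S, IHn. ring. Qed.
Lemma prodI_const n c : prodI n (fun _ => c) = c ^ n.
Proof. induction n; [reflexivity|]. rewrite prodI_S, IHn. simpl. ring. Qed.

Lemma bernoulli n y : -1 <= y -> 1 + INR n * y <= (1 + y) ^ n.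
Proof. intros Hy. induction n. simpl; lra. rewrite S_INR. simpl.
  assert (0 <= INR n) by apply pos_INR. nra. Qed.

Lemma amgm_step n mu a : 0 <= mu -> 0 <= a ->
  mu ^ n * a <= ((INR n * mu + a) / INR (S n)) ^ (S n).
Proof. intros Hmu Ha. destruct n. simpl. lra.
  destruct (Req_dec mu 0). subst. rewrite pow_i by lia.
  rewrite Rmult_0_l. apply pow_le. apply Rmult_le_pos. rewrite Rmult_0_r; lra.
  apply Rlt_le, Rinv_0_lt_compat, lt_0_INR; lia.
  set (k := S n) in *. assert (Hk : 0 < INR (S k)) by (apply lt_0_INR; lia).
  set (y := (a - mu) / (INR (S k) * mu)).
  assert (Hmu' : 0 < mu) by lra.
  assert (Hy : -1 <= y). { assert (E1 : y + 1 = (a + INR k * mu) / (INR (S k) * mu)).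
    { unfold y. rewrite S_INR. field. split; [lra| rewrite S_INR in Hk; lra]. }
    assert (0 <= (a + INR k * mu) / (INR (S k) * mu)).
    { apply Rmult_le_pos. assert (0 <= INR k) by apply pos_INR. nra.
      apply Rlt_le, Rinv_0_lt_compat. nra. } lra. }
  assert (HM : (INR k * mu + a) / INR (S k) = mu * (1 + y)).
  { unfold y. rewrite S_INR in *. field. split; lra. }
  rewrite HM, Rpow_mult_distr. pose proof (bernoulli (S k) y Hy).
  assert (E : mu ^ k * a = mu ^ S k * (1 + INR (S k) * y)).
  { unfold y. change (mu ^ S k) with (mu * mu ^ k). rewrite S_INR in *. field. split; lra. }
  rewrite E. apply Rmult_le_compat_l; auto. apply pow_le; lra. Qed.

Lemma amgm n f : (forall i, (i < n)%nat -> 0 <= f i) ->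
  prodI n f <= (sumI n f / INR n) ^ n.
Proof. induction n; intros H. unfold prodI; simpl; lra.
  rewrite prodI_S, sumI_S.
  assert (Hs : 0 <= sumI n f) by (apply sumI_nonneg; intros; apply H; lia).
  assert (IH := IHn (fun i Hi => H i (Nat.lt_lt_succ_r _ _ Hi))).
  assert (Hf : 0 <= f n) by (apply H; lia).
  destruct n.
  - rewrite prodI_0, sumI_0. simpl. replace (0 + f 0%nat) with (f 0%nat) by ring. lra.
  - set (mu := sumI (S n) f / INR (S n)).
    assert (Hmu : 0 <= mu). { unfold mu. apply Rmult_le_pos; auto. apply Rlt_le, Rinv_0_lt_compat, lt_0_INR; lia. }
    apply Rle_trans with (mu ^ S n * f (S n)).
    apply Rmult_le_compat_r; auto.
    replace (sumI (S n) f + f (S n)) with (INR (S n) * mu + f (S n)).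
    apply amgm_step; auto. unfold mu. field. apply not_0_INR; lia. Qed.


Lemma pow_lt_S n s r : 0 <= s < r -> s ^ S n < r ^ S n.
Proof. intros H. induction n. simpl; lra.
  change (s * s ^ S n < r * r ^ S n).
  assert (0 <= s ^ S n) by (apply pow_le; lra). nra. Qed.

Lemma pow_le_inv n r s : (1 <= n)%nat -> 0 <= r -> 0 <= s -> r ^ n <= s ^ n -> r <= s.
Proof. intros Hn Hr Hs H. destruct (Rle_lt_dec r s); auto.
  destruct n; [lia|]. pose proof (pow_lt_S n s r). lra. Qed.

Lemma rootR_nonneg n x : 0 <= rootR n x.
Proof. unfold rootR. destruct (Rle_dec x 0). lra. unfold Rpower. left; apply exp_pos. Qed.

Lemma rootR_pow n x : (1 <= n)%nat -> 0 <= x -> rootR n x ^ n = x.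
Proof. intros Hn Hx. unfold rootR. destruct (Rle_dec x 0).
  assert (x = 0) by lra. subst. apply pow_i. lia.
  rewrite <- Rpower_pow. rewrite Rpower_mult. rewrite Rinv_l. apply Rpower_1. lra.
  apply not_0_INR; lia. unfold Rpower; apply exp_pos. Qed.

Lemma rootR_mult n x y : 0 <= x -> 0 <= y -> rootR n (x * y) = rootR n x * rootR n y.
Proof. intros Hx Hy.
  destruct (Req_dec x 0). subst. rewrite Rmult_0_l. unfold rootR at 1 2.
  destruct (Rle_dec 0 0); [ring| lra].
  destruct (Req_dec y 0). subst. rewrite Rmult_0_r. unfold rootR at 1 3.
  destruct (Rle_dec 0 0); [ring| lra].
  assert (0 < x * y) by (apply Rmult_lt_0_compat; lra).
  unfold rootR. destruct (Rle_dec (x*y) 0); destruct (Rle_dec x 0); destruct (Rle_dec y 0); try lra.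
  rewrite Rpower_mult_distr; auto; lra. Qed.

Lemma amgm_root n f : (1 <= n)%nat -> (forall i, (i < n)%nat -> 0 <= f i) ->
  INR n * rootR n (prodI n f) <= sumI n f.
Proof. intros Hn H. pose proof (amgm n f H).
  assert (Hn' : 0 < INR n) by (apply lt_0_INR; lia).
  assert (Hs : 0 <= sumI n f) by (apply sumI_nonneg; auto).
  assert (rootR n (prodI n f) <= sumI n f / INR n).
  { apply (pow_le_inv n); auto. apply rootR_nonneg.
    apply Rmult_le_pos; auto. left; apply Rinv_0_lt_compat; auto.
    rewrite rootR_pow; auto. apply prodI_nonneg; auto. }
  apply Rmult_le_reg_r with (/ INR n). apply Rinv_0_lt_compat; auto.
  replace (INR n * rootR n (prodI n f) * / INR n) with (rootR n (prodI n f)) by (field; lra).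
  exact H1. Qed.

Lemma final_alg n (G : nat -> R) (A : nat -> nat -> R) : (1 <= n)%nat ->
  (forall i, (i < n)%nat -> 0 < G i) ->
  (forall i j, (i < n)%nat -> (j < n)%nat -> 0 <= A i j) ->
  (forall j, (j < n)%nat -> sumI n (fun i => G i * A i j) <= G j) ->
  prodI n (fun j => rootR n (prodI n (fun i => A i j))) <= / (INR n ^ n).
Proof. intros Hn HG HA HS.
  set (g := rootR n (prodI n G)).
  assert (HGp : 0 < prodI n G) by (apply prodI_pos; auto).
  assert (Hg : g ^ n = prodI n G) by (apply rootR_pow; auto; lra).
  assert (Hn' : 0 < INR n) by (apply lt_0_INR; lia).
  assert (Hnn : 0 < INR n ^ n) by (apply pow_lt; auto).
  set (F := prodI n (fun j => rootR n (prodI n (fun i => A i j)))).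
  assert (Key : prodI n (fun j => INR n * (g * rootR n (prodI n (fun i => A i j)))) <= prodI n G).
  { apply prodI_le. intros j Hj. split.
    apply Rmult_le_pos; [lra|]. apply Rmult_le_pos; apply rootR_nonneg.
    eapply Rle_trans; [|apply HS; auto].
    replace (g * rootR n (prodI n (fun i => A i j))) with (rootR n (prodI n (fun i => G i * A i j))).
    apply amgm_root; auto. intros i Hi. apply Rmult_le_pos; [left; auto| auto].
    rewrite prodI_mult, rootR_mult; auto. apply prodI_nonneg; intros; left; auto.
    apply prodI_nonneg; intros; auto. }
  rewrite prodI_mult, prodI_const, prodI_mult, prodI_const, <- Hg in Key. fold F in Key.
  assert (0 < g ^ n) by lra.
  assert (INR n ^ n * F <= 1).
  { apply Rmult_le_reg_r with (g ^ n); auto. nra. }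
  apply Rmult_le_reg_l with (INR n ^ n); auto. rewrite Rinv_r; lra. Qed.


Lemma Rint_RInt f a b : ex_RInt f a b -> Rint f a b = RInt f a b.
Proof. intros H. unfold Rint.
  assert (Ex : exists v, exists pr : Riemann_integrable f a b, RiemannInt pr = v).
  { exists (RiemannInt (ex_RInt_Reals_0 f a b H)). eauto. }
  destruct (epsilon_spec (inhabits 0) _ Ex) as [pr Hpr]. rewrite <- Hpr.
  symmetry. apply RInt_Reals. Qed.

Lemma cont_mult (f g : R -> R) z : continuous f z -> continuous g z -> continuous (fun y => f y * g y) z.
Proof. intros; apply (continuous_mult f g); auto. Qed.
Lemma cont_plus (f g : R -> R) z : continuous f z -> continuous g z -> continuous (fun y => f y + g y) z.
Proof. intros; apply (continuous_plus f g); auto. Qed.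
Lemma cont_minus (f g : R -> R) z : continuous f z -> continuous g z -> continuous (fun y => f y - g y) z.
Proof. intros; apply (continuous_minus f g); auto. Qed.
Lemma cont_opp (f : R -> R) z : continuous f z -> continuous (fun y => - f y) z.
Proof. intros; apply (continuous_opp f); auto. Qed.
Lemma cont_inv (f : R -> R) z : continuous f z -> f z <> 0 -> continuous (fun y => / f y) z.
Proof. intros H1 H2. apply (continuous_comp f Rinv). auto.
  apply continuity_pt_filterlim. apply continuity_pt_inv; auto. apply continuity_pt_id. Qed.
Lemma cont_exp (f : R -> R) z : continuous f z -> continuous (fun y => exp (f y)) z.
Proof. intros H. apply (continuous_comp f exp); auto. apply continuous_exp. Qed.

Lemma cont_sumI n (f : nat -> R -> R) z :
  (forall i, (i < n)%nat -> continuous (f i) z) -> continuous (fun y => sumI n (fun i => f i y)) z.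
Proof. induction n; intros H.
  - apply (continuous_ext (fun _ => 0)). intros; reflexivity. apply continuous_const.
  - apply (continuous_ext (fun y => sumI n (fun i => f i y) + f n y)).
    intros; rewrite sumI_S; reflexivity. apply cont_plus. apply IHn; auto. apply H; lia. Qed.

Lemma RInt_sumI n (f : nat -> R -> R) a b :
  (forall i, (i < n)%nat -> ex_RInt (f i) a b) ->
  ex_RInt (fun s => sumI n (fun i => f i s)) a b /\
  RInt (fun s => sumI n (fun i => f i s)) a b = sumI n (fun i => RInt (f i) a b).
Proof. induction n; intros H.
  - split. apply (ex_RInt_ext (fun _ => 0)). intros; reflexivity. apply ex_RInt_const.
    rewrite sumI_0. rewrite (RInt_ext _ (fun _ => 0)). rewrite RInt_const. unfold scal; simpl; unfold mult; simpl; ring.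
    intros; reflexivity.
  - destruct IHn as [IH1 IH2]. intros; apply H; lia.
    assert (Hn : ex_RInt (f n) a b) by (apply H; lia). split.
    + apply (ex_RInt_ext (fun s => plus (sumI n (fun i => f i s)) (f n s))).
      intros; rewrite sumI_S; reflexivity. apply (ex_RInt_plus (fun s => sumI n (fun i => f i s)) (f n)); auto.
    + rewrite (RInt_ext _ (fun s => plus (sumI n (fun i => f i s)) (f n s))).
      rewrite (RInt_plus (fun s => sumI n (fun i => f i s)) (f n)); auto. rewrite sumI_S, IH2. reflexivity.
      intros; rewrite sumI_S; reflexivity. Qed.

Lemma ex_RInt_cont (f : R -> R) a b : a <= b -> (forall z, a <= z <= b -> continuous f z) -> ex_RInt f a b.
Proof. intros Hab H. apply (ex_RInt_continuous (V:=R_CompleteNormedModule)). intros z Hz.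
  rewrite Rmin_left, Rmax_right in Hz by lra. auto. Qed.

Lemma cont_RInt_upper (g : R -> R) C u : (forall y, C <= y -> continuous g y) -> C < u ->
  continuous (fun v => RInt g C v) u.
Proof. intros Hg Hu. apply (ex_derive_continuous (K:=R_AbsRing) (V:=R_NormedModule)). exists (g u).
  apply (is_derive_RInt g (fun v => RInt g C v) C). apply (locally_interval _ u C p_infty); simpl; auto.
  intros y Hy _. apply (RInt_correct (V:=R_CompleteNormedModule)). apply ex_RInt_cont. lra. intros; apply Hg; lra.
  apply Hg; lra. Qed.

Lemma cont_Rint2 (g u v : R -> R) C z : (forall y, C <= y -> continuous g y) ->
  continuous u z -> continuous v z -> C < u z -> C < v z ->
  continuous (fun y => Rint g (u y) (v y)) z.
Proof. intros Hg Hu Hv Huz Hvz.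
  assert (Lu : locally z (fun y => C < u y)).
  { apply (Hu (fun w => C < w)). apply (locally_interval _ (u z) C p_infty); simpl; auto. }
  assert (Lv : locally z (fun y => C < v y)).
  { apply (Hv (fun w => C < w)). apply (locally_interval _ (v z) C p_infty); simpl; auto. }
  apply (continuous_ext_loc _ (fun y => RInt g C (v y) - RInt g C (u y))).
  - generalize (filter_and _ _ Lu Lv). apply filter_imp. intros y [H1 H2].
    assert (E1 : ex_RInt g C (u y)) by (apply ex_RInt_cont; [lra| intros; apply Hg; lra]).
    assert (E2 : ex_RInt g C (v y)) by (apply ex_RInt_cont; [lra| intros; apply Hg; lra]).
    assert (E3 : ex_RInt g (u y) (v y)).
    { apply (ex_RInt_Chasles _ _ C). apply ex_RInt_swap; auto. auto. }
    rewrite Rint_RInt by auto.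
    rewrite <- (RInt_Chasles g C (u y) (v y)) by auto. change (@eq R (plus (RInt g C (u y)) (RInt g (u y) (v y)) - RInt g C (u y)) (RInt g (u y) (v y))). unfold plus; simpl. ring.
  - apply cont_minus.
    + apply (continuous_comp v (fun w => RInt g C w)); auto. apply cont_RInt_upper; auto.
    + apply (continuous_comp u (fun w => RInt g C w)); auto. apply cont_RInt_upper; auto. Qed.


Lemma RInt_scal_R (f : R -> R) a b c : ex_RInt f a b -> RInt (fun s => c * f s) a b = c * RInt f a b.
Proof. intros H. apply (RInt_scal f a b c H). Qed.

Lemma is_RInt_R_unique (f : R -> R) a b v : is_RInt f a b v -> RInt f a b = v.
Proof. intros H. apply (is_RInt_unique (V:=R_CompleteNormedModule)). exact H. Qed.

Lemma ftc_R (f df : R -> R) a b : a <= b -> (forall z, a <= z <= b -> is_derive f z (df z)) ->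
  (forall z, a <= z <= b -> continuous df z) -> ex_RInt df a b /\ RInt df a b = f b - f a.
Proof. intros Hab H1 H2.
  assert (H : is_RInt df a b (minus (f b) (f a))).
  { apply (is_RInt_derive (V:=R_CompleteNormedModule)); rewrite Rmin_left, Rmax_right by lra; auto. }
  split. exists (minus (f b) (f a)). exact H. apply is_RInt_R_unique. exact H. Qed.

Lemma exp_le_R a b : a <= b -> exp a <= exp b.
Proof. intros H. destruct H. left; apply exp_increasing; auto. subst; lra. Qed.

Record PS (m : nat) (p tau : nat -> R -> R) (x x' : R -> R) (A : R) : Prop := {
 ps_pc : forall i z, (i < m)%nat -> A <= z -> continuous (p i) z;
 ps_tc : forall i z, (i < m)%nat -> A <= z -> continuous (tau i) z;
 ps_p0 : forall i z, (i < m)%nat -> A <= z -> 0 <= p i z;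
 ps_tle : forall i z, (i < m)%nat -> A <= z -> tau i z <= z;
 ps_tmono : forall i s z, (i < m)%nat -> A <= s -> s <= z -> tau i s <= tau i z;
 ps_tlim : forall M, exists T, forall i z, (i < m)%nat -> T <= z -> M <= tau i z;
 ps_xd : forall z, A <= z -> is_derive x z (x' z);
 ps_x'c : forall z, A <= z -> continuous x' z;
 ps_eq : forall z, A <= z -> x' z = - sumI m (fun i => p i z * x (tau i z));
 ps_pos : forall z, A <= z -> 0 < x z }.

Definition hfun (x x' : R -> R) := fun z => - x' z / x z.


Lemma ps_xc m p tau x x' A : PS m p tau x x' A -> forall z, A <= z -> continuous x z.
Proof. intros H z Hz. apply (ex_derive_continuous (K:=R_AbsRing) (V:=R_NormedModule)).
  exists (x' z). apply (ps_xd _ _ _ _ _ _ H); auto. Qed.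

Lemma ps_hc m p tau x x' A : PS m p tau x x' A -> forall z, A <= z -> continuous (hfun x x') z.
Proof. intros H z Hz. unfold hfun. apply cont_mult. apply cont_opp. apply (ps_x'c _ _ _ _ _ _ H); auto.
  apply cont_inv. apply (ps_xc _ _ _ _ _ _ H); auto. pose proof (ps_pos _ _ _ _ _ _ H z Hz); lra. Qed.

Lemma ps_L m p tau x x' A : PS m p tau x x' A -> forall a b, A <= a -> a <= b ->
  ex_RInt (hfun x x') a b /\ ln (x a) - ln (x b) = RInt (hfun x x') a b.
Proof. intros H a b Ha Hab.
  destruct (ftc_R (fun z => - ln (x z)) (hfun x x') a b Hab) as [E1 E2].
  - intros z Hz. assert (Hp := ps_pos _ _ _ _ _ _ H z ltac:(lra)).
    unfold hfun. replace (- x' z / x z) with (opp (scal (x' z) (/ x z))).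
    apply (is_derive_ext (fun z => opp (ln (x z)))). intros; reflexivity.
    apply (is_derive_opp (K:=R_AbsRing) (V:=R_NormedModule) (fun z => ln (x z))).
    apply (is_derive_comp ln x z). apply is_derive_ln; auto.
    apply (ps_xd _ _ _ _ _ _ H); lra. unfold opp, scal; simpl. unfold mult; simpl. field. lra.
  - intros z Hz. apply (ps_hc _ _ _ _ _ _ H); lra.
  - split; auto. rewrite E2. ring. Qed.

Lemma ps_hsum m p tau x x' A : PS m p tau x x' A -> forall z, A <= z ->
  hfun x x' z = sumI m (fun k => p k z * (x (tau k z) / x z)).
Proof. intros H z Hz. unfold hfun. rewrite (ps_eq _ _ _ _ _ _ H z Hz).
  assert (Hp := ps_pos _ _ _ _ _ _ H z Hz).
  replace (- - sumI m (fun i => p i z * x (tau i z)) / x z) with (/ x z * sumI m (fun i => p i z * x (tau i z))) by (field; lra).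
  rewrite sumI_mult_l. apply sumI_ext. intros; field; lra. Qed.

Lemma ps_Lg m p tau x x' A : PS m p tau x x' A -> forall (g : R -> R) C a b, A <= C ->
  (forall y, C <= y -> continuous g y) -> (forall y, C <= y -> g y <= hfun x x' y) ->
  C <= a -> a <= b -> x b * exp (RInt g a b) <= x a.
Proof. intros H g C a b HC Hgc Hgh Ha Hab.
  destruct (ps_L _ _ _ _ _ _ H a b ltac:(lra) Hab) as [E1 E2].
  assert (RInt g a b <= RInt (hfun x x') a b).
  { apply RInt_le; auto. apply ex_RInt_cont; auto. intros; apply Hgc; lra.
    intros; apply Hgh; lra. }
  assert (Pa := ps_pos _ _ _ _ _ _ H a ltac:(lra)).
  assert (Pb := ps_pos _ _ _ _ _ _ H b ltac:(lra)).
  assert (exp (RInt g a b) <= exp (ln (x a) - ln (x b))).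
  { apply exp_le_R. lra. }
  unfold Rminus in H1. rewrite exp_plus, exp_Ropp, !exp_ln in H1 by auto.
  apply Rmult_le_reg_r with (/ x b). apply Rinv_0_lt_compat; auto.
  replace (x b * exp (RInt g a b) * / x b) with (exp (RInt g a b)) by (field; lra). exact H1. Qed.

Lemma ps_A1 m p tau x x' A : PS m p tau x x' A -> exists A1, A <= A1 /\
  (forall z, A1 <= z -> 0 <= hfun x x' z) /\ (forall a b, A1 <= a -> a <= b -> x b <= x a).
Proof. intros H. destruct (ps_tlim _ _ _ _ _ _ H A) as [T HT].
  exists (Rmax A T). assert (Hh : forall z, Rmax A T <= z -> 0 <= hfun x x' z).
  { intros z Hz. rewrite (ps_hsum _ _ _ _ _ _ H z) by (eapply Rle_trans; [apply Rmax_l| exact Hz]).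
    apply sumI_nonneg. intros i Hi. apply Rmult_le_pos. apply (ps_p0 _ _ _ _ _ _ H); auto.
    eapply Rle_trans; [apply Rmax_l| exact Hz].
    left. apply Rdiv_lt_0_compat; apply (ps_pos _ _ _ _ _ _ H). apply HT; auto.
    eapply Rle_trans; [apply Rmax_r| exact Hz]. eapply Rle_trans; [apply Rmax_l| exact Hz]. }
  split; [apply Rmax_l| split; auto].
  intros a b Ha Hab. pose proof (ps_Lg _ _ _ _ _ _ H (fun _ => 0) (Rmax A T) a b (Rmax_l _ _)
     (fun y _ => continuous_const 0 y) Hh Ha Hab).
  rewrite RInt_const in H0. unfold scal in H0; simpl in H0. unfold mult in H0; simpl in H0.
  rewrite Rmult_0_r, exp_0, Rmult_1_r in H0. exact H0. Qed.

Lemma ps_A2 m p tau x x' A : PS m p tau x x' A -> exists A2, A <= A2 /\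
  (forall z, A2 <= z -> 0 <= hfun x x' z) /\
  (forall z k, A2 <= z -> (k < m)%nat -> 1 <= x (tau k z) / x z) /\
  (forall z, A2 <= z -> sumI m (fun l => p l z) <= hfun x x' z).
Proof. intros H. destruct (ps_A1 _ _ _ _ _ _ H) as [A1 [HA1 [Hh Hmono]]].
  destruct (ps_tlim _ _ _ _ _ _ H A1) as [T HT].
  set (A2 := Rmax A1 T).
  assert (W : forall z k, A2 <= z -> (k < m)%nat -> 1 <= x (tau k z) / x z).
  { intros z k Hz Hk. assert (A1 <= z) by (eapply Rle_trans; [apply Rmax_l| exact Hz]).
    assert (A1 <= tau k z) by (apply HT; auto; eapply Rle_trans; [apply Rmax_r| exact Hz]).
    assert (x z <= x (tau k z)) by (apply Hmono; auto; apply (ps_tle _ _ _ _ _ _ H); auto; lra).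
    assert (0 < x z) by (apply (ps_pos _ _ _ _ _ _ H); lra).
    apply Rmult_le_reg_r with (x z); auto. unfold Rdiv. rewrite Rmult_assoc, Rinv_l; lra. }
  exists A2. split. eapply Rle_trans; [exact HA1| apply Rmax_l].
  split. intros; apply Hh. eapply Rle_trans; [apply Rmax_l| eauto].
  split; auto. intros z Hz. rewrite (ps_hsum _ _ _ _ _ _ H z).
  apply sumI_le. intros i Hi. rewrite <- (Rmult_1_r (p i z)) at 1. apply Rmult_le_compat_l.
  apply (ps_p0 _ _ _ _ _ _ H); auto.
  assert (A1 <= z) by (eapply Rle_trans; [apply Rmax_l| exact Hz]). lra. auto.
  assert (A1 <= z) by (eapply Rle_trans; [apply Rmax_l| exact Hz]). lra. Qed.


Definition Fg (m : nat) (p tau : nat -> R -> R) (g : R -> R) (t : R) : R :=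
  prodI m (fun j => rootR m (prodI m (fun i =>
    Rint (fun s => p i s * exp (Rint g (tau i s) (tau i t))) (tau j t) t))).

Lemma ps_main m p tau x x' A : (1 <= m)%nat -> PS m p tau x x' A -> forall (g : R -> R) C, A <= C ->
  (forall y, C <= y -> continuous g y) -> (forall y, C <= y -> g y <= hfun x x' y) ->
  exists E, forall t, E <= t -> Fg m p tau g t <= / (INR m ^ m).
Proof. intros Hm H g C HC Hgc Hgh.
  destruct (ps_tlim _ _ _ _ _ _ H (C + 1)) as [D0 HD0].
  set (D := Rmax (D0 + 1) (C + 1)).
  assert (HD1 : forall i s, (i < m)%nat -> D - 1 <= s -> C + 1 <= tau i s).
  { intros i s Hi Hs. apply HD0; auto. assert (D0 + 1 <= D) by apply Rmax_l. lra. }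
  assert (HDC : C + 1 <= D) by apply Rmax_r.
  destruct (ps_tlim _ _ _ _ _ _ H D) as [E0 HE0].
  exists (Rmax E0 D). intros t Ht.
  assert (HtE : E0 <= t) by (eapply Rle_trans; [apply Rmax_l| exact Ht]).
  assert (HtD : D <= t) by (eapply Rle_trans; [apply Rmax_r| exact Ht]).
  set (I := fun i s => p i s * exp (Rint g (tau i s) (tau i t))).
  assert (HIc : forall i s, (i < m)%nat -> D <= s -> continuous (I i) s).
  { intros i s Hi Hs. unfold I. apply cont_mult. apply (ps_pc _ _ _ _ _ _ H); auto; lra.
    apply cont_exp. apply (cont_Rint2 g (tau i) (fun _ => tau i t) C); auto.
    apply (ps_tc _ _ _ _ _ _ H); auto; lra. apply continuous_const.
    assert (C + 1 <= tau i s) by (apply HD1; auto; lra). lra.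
    assert (C + 1 <= tau i t) by (apply HD1; auto; lra). lra. }
  assert (Hab : forall j, (j < m)%nat -> D <= tau j t /\ tau j t <= t).
  { intros j Hj. split. apply HE0; auto. apply (ps_tle _ _ _ _ _ _ H); auto; lra. }
  assert (HIex : forall i j, (i < m)%nat -> (j < m)%nat -> ex_RInt (I i) (tau j t) t).
  { intros i j Hi Hj. destruct (Hab j Hj). apply ex_RInt_cont; auto. intros; apply HIc; auto; lra. }
  apply (final_alg m (fun i => x (tau i t)) (fun i j => Rint (I i) (tau j t) t) Hm).
  - intros i Hi. apply (ps_pos _ _ _ _ _ _ H). destruct (Hab i Hi). lra.
  - intros i j Hi Hj. rewrite Rint_RInt by auto. destruct (Hab j Hj).
    apply RInt_ge_0; auto. intros s Hs. unfold I. apply Rmult_le_pos.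
    apply (ps_p0 _ _ _ _ _ _ H); auto; lra. left; apply exp_pos.
  - intros j Hj. destruct (Hab j Hj) as [Ha Hb]. set (a := tau j t) in *.
    assert (Hxs : forall i s, (i < m)%nat -> D <= s -> continuous (fun s => x (tau i s)) s).
    { intros i s Hi Hs. apply (continuous_comp (tau i) x). apply (ps_tc _ _ _ _ _ _ H); auto; lra.
      apply (ps_xc _ _ _ _ _ _ H). assert (C + 1 <= tau i s) by (apply HD1; auto; lra). lra. }
    set (S := fun s => sumI m (fun i => p i s * x (tau i s))).
    assert (ES : ex_RInt S a t /\ RInt S a t = x a - x t).
    { destruct (ftc_R (fun z => - x z) (fun z => - x' z) a t Hb) as [F1 F2].
      - intros z Hz. apply (is_derive_ext (fun z => opp (x z))). intros; reflexivity.
        apply (is_derive_opp (K:=R_AbsRing) (V:=R_NormedModule) x). apply (ps_xd _ _ _ _ _ _ H); lra.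
      - intros z Hz. apply cont_opp. apply (ps_x'c _ _ _ _ _ _ H); lra.
      - assert (Ext : forall z, Rmin a t < z < Rmax a t -> - x' z = S z).
        { intros z Hz. rewrite Rmin_left, Rmax_right in Hz by lra. unfold S.
          rewrite (ps_eq _ _ _ _ _ _ H z) by lra. ring. }
        split. apply (ex_RInt_ext (fun z => - x' z)); auto.
        rewrite (RInt_ext S (fun z => - x' z)). rewrite F2. simpl. lra. intros z Hz; symmetry; auto. }
    destruct ES as [ES1 ES2].
    destruct (RInt_sumI m (fun i s => x (tau i t) * I i s) a t) as [EL1 EL2].
    { intros i Hi. apply ex_RInt_cont; auto. intros z Hz. apply cont_mult. apply continuous_const.
      apply HIc; auto; lra. }
    assert (Le : RInt (fun s => sumI m (fun i => x (tau i t) * I i s)) a t <= RInt S a t).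
    { apply RInt_le; auto. intros s Hs. unfold S. apply sumI_le. intros i Hi.
      unfold I. assert (C + 1 <= tau i s) by (apply HD1; auto; lra).
      assert (tau i s <= tau i t) by (apply (ps_tmono _ _ _ _ _ _ H); auto; lra).
      assert (Ex : ex_RInt g (tau i s) (tau i t)) by (apply ex_RInt_cont; auto; intros; apply Hgc; lra).
      rewrite Rint_RInt by auto.
      pose proof (ps_Lg _ _ _ _ _ _ H g C (tau i s) (tau i t) HC Hgc Hgh ltac:(lra) ltac:(lra)).
      assert (0 <= p i s) by (apply (ps_p0 _ _ _ _ _ _ H); auto; lra). nra. }
    rewrite EL2, ES2 in Le.
    assert (0 < x t) by (apply (ps_pos _ _ _ _ _ _ H); lra).
    eapply Rle_trans; [|apply Rle_trans with (x a - x t); [exact Le| lra]].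
    right. apply sumI_ext. intros i Hi. rewrite RInt_scal_R by (apply HIex; auto). rewrite Rint_RInt by (apply HIex; auto). reflexivity.
Qed.


Lemma finite_T (m : nat) (P : nat -> R -> Prop) :
  (forall k, (k < m)%nat -> exists T, forall z, T <= z -> P k z) ->
  exists T, forall k z, (k < m)%nat -> T <= z -> P k z.
Proof. induction m; intros H. exists 0. intros; lia.
  destruct IHm as [T1 HT1]. intros; apply H; lia.
  destruct (H m (Nat.lt_succ_diag_r m)) as [T2 HT2].
  exists (Rmax T1 T2). intros k z Hk Hz. destruct (Nat.eq_dec k m).
  subst. apply HT2. eapply Rle_trans; [apply Rmax_r| exact Hz].
  apply HT1. lia. eapply Rle_trans; [apply Rmax_l| exact Hz]. Qed.

Lemma ps_Q1 m p tau x x' A : PS m p tau x x' A -> exists C, A <= C /\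
  (forall y, C <= y -> continuous (Q1 m p tau) y) /\ (forall y, C <= y -> Q1 m p tau y <= hfun x x' y).
Proof. intros H. destruct (ps_A2 _ _ _ _ _ _ H) as [A2 [HA2 [_ [_ HP]]]].
  destruct (ps_tlim _ _ _ _ _ _ H (A2 + 1)) as [T HT].
  set (P := fun u => sumI m (fun l => p l u)).
  assert (HPc : forall y, A2 <= y -> continuous P y).
  { intros y Hy. apply cont_sumI. intros; apply (ps_pc _ _ _ _ _ _ H); auto; lra. }
  exists (Rmax (A2 + 1) T). assert (A2 + 1 <= Rmax (A2 + 1) T) by apply Rmax_l.
  split. lra. split.
  - intros y Hy. unfold Q1. apply cont_sumI. intros k Hk. apply cont_mult.
    apply (ps_pc _ _ _ _ _ _ H); auto; lra. apply cont_exp.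
    apply (cont_Rint2 P (tau k) (fun y => y) A2); auto.
    apply (ps_tc _ _ _ _ _ _ H); auto; lra. apply continuous_id.
    assert (A2 + 1 <= tau k y) by (apply HT; auto; eapply Rle_trans; [apply Rmax_r| exact Hy]). lra.
    lra.
  - intros y Hy. rewrite (ps_hsum _ _ _ _ _ _ H y) by lra. unfold Q1. apply sumI_le.
    intros k Hk. apply Rmult_le_compat_l. apply (ps_p0 _ _ _ _ _ _ H); auto; lra.
    assert (A2 + 1 <= tau k y) by (apply HT; auto; eapply Rle_trans; [apply Rmax_r| exact Hy]).
    assert (tau k y <= y) by (apply (ps_tle _ _ _ _ _ _ H); auto; lra).
    fold P. rewrite Rint_RInt by (apply ex_RInt_cont; auto; intros; apply HPc; lra).
    pose proof (ps_Lg _ _ _ _ _ _ H P A2 (tau k y) y HA2 HPc HP ltac:(lra) ltac:(lra)).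
    assert (0 < x y) by (apply (ps_pos _ _ _ _ _ _ H); lra).
    apply Rmult_le_reg_r with (x y); auto. unfold Rdiv. rewrite Rmult_assoc, Rinv_l by lra. lra. Qed.

Lemma ps_step m p tau x x' A k beta c delta : PS m p tau x x' A -> (k < m)%nat ->
  liminf_inf_eq (fun t => Rint (p k) (tau k t) t) beta -> 0 <= c -> 0 < delta ->
  (exists T, forall z, T <= z -> c <= x (tau k z) / x z) ->
  (exists T, forall z, T <= z -> exp (c * (beta - delta)) <= x (tau k z) / x z).
Proof. intros H Hk Hlim Hc Hd [T HT].
  destruct (Hlim delta Hd) as [[T' HT'] _].
  destruct (ps_tlim _ _ _ _ _ _ H A) as [TA HTA].
  set (C := Rmax (Rmax T A) TA).
  assert (HC1 : T <= C) by (unfold C; eapply Rle_trans; [apply Rmax_l|apply Rmax_l]).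
  assert (HC2 : A <= C) by (unfold C; eapply Rle_trans; [apply Rmax_r|apply Rmax_l]).
  assert (HC3 : TA <= C) by (unfold C; apply Rmax_r).
  destruct (ps_tlim _ _ _ _ _ _ H C) as [T'' HT''].
  exists (Rmax (Rmax T' T'') C). intros z Hz.
  assert (Z1 : T' <= z) by (eapply Rle_trans; [|exact Hz]; eapply Rle_trans; [apply Rmax_l|apply Rmax_l]).
  assert (Z2 : T'' <= z) by (eapply Rle_trans; [|exact Hz]; eapply Rle_trans; [apply Rmax_r|apply Rmax_l]).
  assert (Z3 : C <= z) by (eapply Rle_trans; [apply Rmax_r| exact Hz]).
  assert (Hpc : forall y, C <= y -> continuous (fun u => c * p k u) y).
  { intros y Hy. apply cont_mult. apply continuous_const. apply (ps_pc _ _ _ _ _ _ H); auto; lra. }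
  assert (Hgh : forall y, C <= y -> c * p k y <= hfun x x' y).
  { intros y Hy. rewrite (ps_hsum _ _ _ _ _ _ H y) by lra.
    eapply Rle_trans; [| apply (sumI_ge_term m (fun k0 => p k0 y * (x (tau k0 y) / x y)) k); auto].
    simpl. rewrite Rmult_comm. apply Rmult_le_compat_l. apply (ps_p0 _ _ _ _ _ _ H); auto; lra.
    apply HT; lra.
    intros i Hi. apply Rmult_le_pos. apply (ps_p0 _ _ _ _ _ _ H); auto; lra.
    left. apply Rdiv_lt_0_compat; apply (ps_pos _ _ _ _ _ _ H). apply HTA; auto; lra. lra. }
  assert (Htk : C <= tau k z) by (apply HT''; auto).
  assert (Htz : tau k z <= z) by (apply (ps_tle _ _ _ _ _ _ H); auto; lra).
  pose proof (ps_Lg _ _ _ _ _ _ H (fun u => c * p k u) C (tau k z) z HC2 Hpc Hgh Htk Htz).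
  assert (Ex : ex_RInt (p k) (tau k z) z).
  { apply ex_RInt_cont; auto. intros; apply (ps_pc _ _ _ _ _ _ H); auto; lra. }
  rewrite RInt_scal_R in H0 by auto.
  assert (Hb := HT' z Z1). simpl in Hb. rewrite Rint_RInt in Hb by auto.
  assert (0 < x z) by (apply (ps_pos _ _ _ _ _ _ H); lra).
  assert (exp (c * (beta - delta)) <= exp (c * RInt (p k) (tau k z) z)).
  { apply exp_le_R. nra. }
  apply Rmult_le_reg_r with (x z); auto. unfold Rdiv. rewrite Rmult_assoc, Rinv_l by lra.
  nra. Qed.


Lemma ps_lam m p tau x x' A k beta lam : PS m p tau x x' A -> (k < m)%nat ->
  liminf_inf_eq (fun t => Rint (p k) (tau k t) t) beta -> 0 < beta ->
  exp (beta * lam) = lam -> (forall l, exp (beta * l) = l -> lam <= l) ->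
  forall eps, eps > 0 -> exists T, forall z, T <= z -> lam - eps <= x (tau k z) / x z.
Proof. intros H Hk Hlim Hb Hroot Hmin eps Heps.
  set (S := fun c => exists T, forall z, T <= z -> c <= x (tau k z) / x z).
  change (S (lam - eps)). apply NNPP. intros Hn.
  assert (Sdown : forall c c', S c -> c' <= c -> S c').
  { intros c c' [T HT] Hc. exists T. intros z Hz. specialize (HT z Hz). lra. }
  assert (S1 : S 1).
  { destruct (ps_A2 _ _ _ _ _ _ H) as [A2 [_ [_ [HW _]]]]. exists A2. intros; apply HW; auto. }
  set (E := fun c => 1 <= c /\ S c).
  assert (Ebd : forall c, E c -> c < lam - eps).
  { intros c [_ Hc]. destruct (Rlt_le_dec c (lam - eps)); auto. exfalso. apply Hn. eapply Sdown; eauto. }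
  destruct (completeness E) as [L [HL1 HL2]].
  { exists (lam - eps). intros c Hc. left. apply Ebd; auto. }
  { exists 1. split; [lra| auto]. }
  assert (L1 : 1 <= L) by (apply HL1; split; [lra| auto]).
  assert (L2 : L <= lam - eps) by (apply HL2; intros c Hc; left; apply Ebd; auto).
  assert (Hfix : exp (beta * L) <= L).
  { destruct (Rle_lt_dec (exp (beta * L)) L) as [|Hgt]; auto. exfalso.
    assert (HlnL : ln L < beta * L).
    { rewrite <- (ln_exp (beta * L)). apply ln_increasing; lra. }
    set (g0 := beta * L - ln L). assert (Hg0 : 0 < g0) by (unfold g0; lra).
    set (eta := g0 / (4 * beta)).
    assert (Heta : 0 < eta) by (unfold eta; apply Rdiv_lt_0_compat; lra).
    assert (Hc : exists c, E c /\ L - eta < c).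
    { apply NNPP. intros Hno. assert (L <= L - eta). apply HL2. intros c Hc.
      destruct (Rle_lt_dec c (L - eta)); auto. exfalso; apply Hno; eauto. lra. }
    destruct Hc as [c [[Hc1 Hc2] Hc3]].
    assert (Hc4 : c <= L) by (apply HL1; split; auto).
    set (delta := Rmin (beta / 2) (g0 / (4 * L))).
    assert (Hd1 : 0 < delta) by (unfold delta; apply Rmin_pos; apply Rdiv_lt_0_compat; lra).
    assert (Hd2 : delta <= beta / 2) by apply Rmin_l.
    assert (Hd3 : L * delta <= g0 / 4).
    { assert (delta <= g0 / (4 * L)) by apply Rmin_r.
      replace (g0 / 4) with (L * (g0 / (4 * L))) by (field; lra). apply Rmult_le_compat_l; lra. }
    assert (Hetab : eta * beta = g0 / 4) by (unfold eta; field; lra).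
    pose proof (ps_step m p tau x x' A k beta c delta H Hk Hlim ltac:(lra) Hd1 Hc2) as Hs.
    assert (Hbig : ln L < c * (beta - delta)).
    { assert (c * beta >= (L - eta) * beta) by nra. assert (c * delta <= L * delta) by nra.
      unfold g0 in *. nra. }
    assert (E (exp (c * (beta - delta)))).
    { split; auto. rewrite <- exp_0. apply exp_le_R. nra. }
    assert (exp (c * (beta - delta)) <= L) by (apply HL1; auto).
    assert (L < exp (c * (beta - delta))).
    { rewrite <- (exp_ln L) at 1 by lra. apply exp_increasing. lra. }
    lra. }
  set (phi := fun y => exp (beta * y) - y).
  assert (Hphic : continuity phi).
  { intros y. apply continuity_pt_filterlim. unfold phi. apply cont_minus.
    apply cont_exp. apply cont_mult. apply continuous_const. apply continuous_id. apply continuous_id. }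
  destruct (IVT_gen phi 0 L 0 Hphic) as [y [Hy1 Hy2]].
  { split. eapply Rle_trans; [apply Rmin_r|]. unfold phi; lra.
    eapply Rle_trans; [|apply Rmax_l]. unfold phi. rewrite Rmult_0_r, exp_0. lra. }
  rewrite Rmax_right in Hy1 by lra.
  assert (exp (beta * y) = y) by (unfold phi in Hy2; lra).
  assert (lam <= y) by (apply Hmin; auto). lra.
Qed.


Lemma ps_false m p tau x x' A : (1 <= m)%nat -> PS m p tau x x' A ->
  (limsup_inf_gt (F1 m p tau) (/ (INR m ^ m))
     \/
     exists (beta lam : nat -> R),
       (forall i, (i < m)%nat ->
          liminf_inf_eq (fun t => Rint (p i) (tau i t) t) (beta i) /\
          0 < beta i /\ beta i <= exp (-1) /\
          exp (beta i * lam i) = lam i /\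
          (forall l, exp (beta i * l) = l -> lam i <= l)) /\
       limsup_0plus_gt (fun eps d => limsup_inf_gt (fun t => F2 m p tau lam eps t) d)
                       (/ (INR m ^ m))) -> False.
Proof. intros Hm H [Hc | [beta [lam [Hbl Hc]]]].
  - destruct (ps_Q1 _ _ _ _ _ _ H) as [C [HC [Hgc Hgh]]].
    destruct (ps_main _ _ _ _ _ _ Hm H _ C HC Hgc Hgh) as [E HE].
    destruct Hc as [d [Hd Hd2]]. destruct (Hd2 E) as [t [Ht Hdt]].
    specialize (HE t Ht). change (Fg m p tau (Q1 m p tau) t) with (F1 m p tau t) in HE. lra.
  - destruct Hc as [d [Hd Hd2]]. destruct (Hd2 1 ltac:(lra)) as [eps [He1 [He2 [d' [Hd' Hd'2]]]]].
    destruct (finite_T m (fun k z => lam k - eps <= x (tau k z) / x z)) as [T HT].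
    { intros k Hk. destruct (Hbl k Hk) as [B1 [B2 [_ [B4 B5]]]].
      apply (ps_lam m p tau x x' A k (beta k) (lam k) H Hk B1 B2 B4 B5 eps He1). }
    set (g := fun xi => sumI m (fun k => (lam k - eps) * p k xi)).
    assert (Hgc : forall y, Rmax A T <= y -> continuous g y).
    { intros y Hy. apply cont_sumI. intros k Hk. apply cont_mult. apply continuous_const.
      apply (ps_pc _ _ _ _ _ _ H); auto. eapply Rle_trans; [apply Rmax_l| exact Hy]. }
    assert (Hgh : forall y, Rmax A T <= y -> g y <= hfun x x' y).
    { intros y Hy. assert (A <= y) by (eapply Rle_trans; [apply Rmax_l| exact Hy]).
      assert (T <= y) by (eapply Rle_trans; [apply Rmax_r| exact Hy]).
      rewrite (ps_hsum _ _ _ _ _ _ H y) by auto. apply sumI_le. intros k Hk.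
      rewrite Rmult_comm. apply Rmult_le_compat_l. apply (ps_p0 _ _ _ _ _ _ H); auto. apply HT; auto. }
    destruct (ps_main _ _ _ _ _ _ Hm H g (Rmax A T) (Rmax_l _ _) Hgc Hgh) as [E HE].
    destruct (Hd'2 E) as [t [Ht Hdt]].
    specialize (HE t Ht). change (Fg m p tau g t) with (F2 m p tau lam eps t) in HE. lra.
Qed.

Lemma cont_from_to_cont f a z : cont_on_from f a -> a < z -> continuous f z.
Proof. intros H Hz. apply continuity_pt_filterlim.
  unfold continuity_pt, continue_in, limit1_in, limit_in. intros eps Heps.
  destruct (H z ltac:(lra) eps Heps) as [d [Hd Hd2]].
  exists (Rmin d (z - a)). split. apply Rmin_pos; lra.
  intros y [_ Hy]. simpl in *. unfold R_dist in *.
  assert (Rabs (y - z) < d) by (eapply Rlt_le_trans; [exact Hy| apply Rmin_l]).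
  assert (Rabs (y - z) < z - a) by (eapply Rlt_le_trans; [exact Hy| apply Rmin_r]).
  apply Hd2; auto. apply Rabs_def2 in H1. lra. Qed.

Lemma deriv_from_to f a z d : deriv_within_from f a z d -> a < z -> is_derive f z d.
Proof. intros H Hz. apply is_derive_Reals. intros eps Heps.
  destruct (H eps Heps) as [dl [Hdl Hdl2]].
  assert (Hp : 0 < Rmin dl (z - a)) by (apply Rmin_pos; lra).
  exists (mkposreal _ Hp). intros h Hh Hh2. simpl in Hh2. apply Hdl2; auto.
  eapply Rlt_le_trans; [exact Hh2| apply Rmin_l].
  assert (Rabs h < z - a) by (eapply Rlt_le_trans; [exact Hh2| apply Rmin_r]).
  apply Rabs_def2 in H0. lra. Qed.

Lemma cont_Rmax b s0 : continuous (fun s => Rmax s b) s0.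
Proof. assert (E : forall s, (s + b + Rabs (s - b)) * / 2 = Rmax s b).
  { intros s. unfold Rmax. destruct (Rle_dec s b).
    rewrite Rabs_left1 by lra. field. rewrite Rabs_right by lra. field. }
  apply (continuous_ext (fun s => (s + b + Rabs (s - b)) * / 2)).
  - intros s. apply E.
  - apply cont_mult; [|apply continuous_const]. apply cont_plus. apply cont_plus.
    apply continuous_id. apply continuous_const. apply continuous_Rabs_comp.
    apply cont_minus. apply continuous_id. apply continuous_const. Qed.

Lemma mk_PS m t0 p tau y y' b :
  (forall i, (i < m)%nat -> cont_on_from (p i) t0) ->
  (forall i, (i < m)%nat -> cont_on_from (tau i) t0) ->
  (forall i t, (i < m)%nat -> t0 <= t -> 0 <= p i t) ->
  (forall i t, (i < m)%nat -> t0 <= t -> tau i t <= t) ->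
  (forall i, (i < m)%nat -> forall M, exists T, forall t, T <= t -> M <= tau i t) ->
  (forall i s t, (i < m)%nat -> t0 <= s -> s <= t -> tau i s <= tau i t) ->
  t0 < b ->
  (forall z, b <= z -> is_derive y z (y' z)) ->
  (forall z, b <= z -> continuous y' z) ->
  (forall z, b <= z -> y' z = - sumI m (fun i => p i z * y (tau i z))) ->
  (forall z, b <= z -> 0 < y z) -> PS m p tau y y' b.
Proof. intros Hpc Htc Hp0 Htle Htlim Htmono Hb Hd Hc Heq Hpos. constructor; auto.
  - intros i z Hi Hz. apply (cont_from_to_cont _ t0); auto; lra.
  - intros i z Hi Hz. apply (cont_from_to_cont _ t0); auto; lra.
  - intros i z Hi Hz. apply Hp0; auto; lra.
  - intros i z Hi Hz. apply Htle; auto; lra.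
  - intros i s z Hi Hs Hz. apply Htmono; auto; lra.
  - intros M. destruct (finite_T m (fun i z => M <= tau i z)) as [T HT].
    intros k Hk. apply Htlim; auto. exists T; auto. Qed.

Theorem theorem3p3 (m : nat) (t0 : R) (p tau : nat -> R -> R)
  (Hm : (1 <= m)%nat)
  (Hp_cont : forall i, (i < m)%nat -> cont_on_from (p i) t0)
  (Htau_cont : forall i, (i < m)%nat -> cont_on_from (tau i) t0)
  (Hp_nonneg : forall i t, (i < m)%nat -> t0 <= t -> 0 <= p i t)
  (Htau_nonneg : forall i t, (i < m)%nat -> t0 <= t -> 0 <= tau i t)
  (Htau_le : forall i t, (i < m)%nat -> t0 <= t -> tau i t <= t)
  (Htau_lim : forall i, (i < m)%nat ->
     forall M, exists T, forall t, T <= t -> M <= tau i t)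
  (Htau_mono : forall i s t, (i < m)%nat -> t0 <= s -> s <= t -> tau i s <= tau i t)
  (Hcond :
     limsup_inf_gt (F1 m p tau) (/ (INR m ^ m))
     \/
     exists (beta lam : nat -> R),
       (forall i, (i < m)%nat ->
          liminf_inf_eq (fun t => Rint (p i) (tau i t) t) (beta i) /\
          0 < beta i /\ beta i <= exp (-1) /\
          exp (beta i * lam i) = lam i /\
          (forall l, exp (beta i * l) = l -> lam i <= l)) /\
       limsup_0plus_gt (fun eps d => limsup_inf_gt (fun t => F2 m p tau lam eps t) d)
                       (/ (INR m ^ m))) :
  forall (x : R -> R) (T0 : R), is_solution m t0 p tau x T0 -> oscillatory x T0.
Proof.
  intros x T0 [HT0 [Hxc [T1 [_ [x' [Hx'c [Hxd Heq]]]]]]].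
  apply NNPP. intros Hno.
  assert (Hnz : exists T, forall t, T <= t -> T0 <= t -> x t <> 0).
  { apply NNPP. intros Hn. apply Hno. intros T. apply NNPP. intros Hn2. apply Hn. exists T.
    intros t Ht Ht0 Hx. apply Hn2. exists t. auto. }
  destruct Hnz as [T HT].
  set (A0 := Rmax t0 (Rmax T0 T1) + 1).
  assert (HA0a : t0 < A0) by (unfold A0; pose proof (Rmax_l t0 (Rmax T0 T1)); lra).
  assert (HA0b : T0 < A0) by (unfold A0; pose proof (Rmax_r t0 (Rmax T0 T1)); pose proof (Rmax_l T0 T1); lra).
  assert (HA0c : T1 < A0) by (unfold A0; pose proof (Rmax_r t0 (Rmax T0 T1)); pose proof (Rmax_r T0 T1); lra).
  set (b := Rmax T A0).
  assert (Hb1 : A0 <= b) by apply Rmax_r. assert (Hb2 : T <= b) by apply Rmax_l.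
  assert (Hnzb : forall z, b <= z -> x z <> 0) by (intros z Hz; apply HT; lra).
  assert (Hcx : forall z, A0 <= z -> continuous x z) by (intros; apply (cont_from_to_cont x T0); auto; lra).
  set (f := fun s => x (Rmax s b)).
  assert (Hfc : continuity f).
  { intros s. apply continuity_pt_filterlim. unfold f.
    apply (continuous_comp (fun s => Rmax s b) x). apply cont_Rmax.
    apply Hcx. pose proof (Rmax_r s b). lra. }
  assert (Hsame : forall c, b <= c -> x b * x c > 0).
  { intros c Hc. destruct (Rtotal_order (x b * x c) 0) as [Hlt|[Heq0|Hgt]]; auto; exfalso.
    - destruct (IVT_gen f b c 0 Hfc) as [z [Hz1 Hz2]].
      { unfold f. rewrite !Rmax_left by lra.
        assert (Hnb := Hnzb b ltac:(lra)). assert (Hnc := Hnzb c Hc).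
        destruct (Rtotal_order (x b) 0) as [Hxb|[Hxb|Hxb]]; [|lra|].
        - assert (x c > 0) by (destruct (Rtotal_order (x c) 0) as [|[|]]; nra).
          split. eapply Rle_trans; [apply Rmin_l|]. lra. eapply Rle_trans; [|apply Rmax_r]. lra.
        - assert (x c < 0) by (destruct (Rtotal_order (x c) 0) as [|[|]]; nra).
          split. eapply Rle_trans; [apply Rmin_r|]. lra. eapply Rle_trans; [|apply Rmax_l]. lra. }
      rewrite Rmin_left, Rmax_right in Hz1 by lra. unfold f in Hz2. rewrite Rmax_left in Hz2 by lra.
      apply (Hnzb z); lra.
    - destruct (Rmult_integral _ _ Heq0); [apply (Hnzb b)|apply (Hnzb c)]; auto; lra. }
  assert (HeqA : forall z, b <= z -> x' z = - sumI m (fun i => p i z * x (tau i z))).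
  { intros z Hz. specialize (Heq z ltac:(lra)). lra. }
  assert (Hdx : forall z, b <= z -> is_derive x z (x' z)).
  { intros z Hz; apply (deriv_from_to x T1). apply Hxd; lra. lra. }
  assert (Hcx' : forall z, b <= z -> continuous x' z).
  { intros z Hz; apply (cont_from_to_cont x' T1); auto; lra. }
  assert (Hnb := Hnzb b ltac:(lra)).
  destruct (Rtotal_order (x b) 0) as [Hxb|[Hxb|Hxb]]; [|lra|].
  - apply (ps_false m p tau (fun z => - x z) (fun z => - x' z) b Hm); auto.
    apply (mk_PS m t0); auto. lra.
    + intros z Hz. apply (is_derive_ext (fun z => opp (x z))). intros; reflexivity.
      apply (is_derive_opp (K:=R_AbsRing) (V:=R_NormedModule) x). auto.
    + intros z Hz. apply cont_opp. auto.
    + intros z Hz. rewrite HeqA by auto. rewrite <- sumI_opp. f_equal. apply sumI_ext.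
      intros; ring.
    + intros z Hz. specialize (Hsame z Hz). nra.
  - apply (ps_false m p tau x x' b Hm); auto.
    apply (mk_PS m t0); auto. lra.
    intros z Hz. specialize (Hsame z Hz). nra.
Qed.
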